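(* The sequence $((x_n, y_n))_{n \geq 0}$ of coordinates of the points visited by the Hilbert curve is $4$-regular; more precisely, for all $n \geq 0$ we have $(x_n, y_n) = v\,\gamma((n)_4)\,w$, where $(n)_4$ is the base-$4$ representation of $n$, $\gamma$ is extended to words multiplicatively, and $$v = \begin{bmatrix} 0&0&0&1&0\\ 0&0&1&1&0 \end{bmatrix},\quad w = \begin{bmatrix}1\\0\\0\\0\\0\end{bmatrix},$$ $$\gamma(0)=\begin{bmatrix} 0&0&0&0&-4\\ 1&0&-1&-1&4\\ 0&0&1&0&0\\ 0&0&0&1&0\\ 0&1&1&1&1\end{bmatrix},\quad \gamma(1)=\begin{bmatrix} 0&0&0&0&-4\\ 0&0&0&-1&0\\ 1&-2&-3&-2&4\\ 0&2&3&3&0\\ 0&1&1&1&1\end{bmatrix},$$ $$\gamma(2)=\begin{bmatrix} 0&0&0&0&-4\\ 0&-2&-2&-3&0\\ 0&0&-1&0&0\\ 1&2&3&3&4\\ 0&1&1&1&1\end{bmatrix},\quad \gamma(3)=\begin{bmatrix} 0&0&0&0&-4\\ 1&-3&-2&-2&1\\ -1&2&1&2&-4\\ 1&1&1&0&7\\ 0&1&1&1&1\end{bmatrix}.$$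
   Context: The Hilbert curve is encoded as an infinite word $\mathbf{HC} = h_0h_1h_2\cdots$ over $\{\mathtt{U},\mathtt{D},\mathtt{R},\mathtt{L}\}$ (up, down, right, left): it is the unique infinite word having every $A_n$ as a prefix, where $A_0=\epsilon$ and, with $t_D$ the coding $\mathtt{U}\mapsto\mathtt{R},\mathtt{D}\mapsto\mathtt{L},\mathtt{R}\mapsto\mathtt{U},\mathtt{L}\mapsto\mathtt{D}$ (flip about the main diagonal) and $t_H$ the coding $\mathtt{U}\mapsto\mathtt{D},\mathtt{D}\mapsto\mathtt{U},\mathtt{R}\mapsto\mathtt{L},\mathtt{L}\mapsto\mathtt{R}$ ($180^\circ$ rotation), $A_{2n+1}=A_{2n}\,\mathtt{U}\,t_D(A_{2n})\,\mathtt{R}\,t_D(A_{2n})\,\mathtt{D}\,t_H(A_{2n})$ and $A_{2n+2}=A_{2n+1}\,\mathtt{R}\,t_D(A_{2n+1})\,\mathtt{U}\,t_D(A_{2n+1})\,\mathtt{L}\,t_H(A_{2n+1})$. Starting at $(x_0,y_0)=(0,0)$, one sets $(x_{n+1},y_{n+1})=(x_n,y_n)+(1,0),(-1,0),(0,1),(0,-1)$ according as $h_n=\mathtt{R},\mathtt{L},\mathtt{U},\mathtt{D}$. A sequence is $k$-regular if some finite subset of its $k$-kernel $\{(a_{k^e n+i})_{n\ge0}: e\ge0,\ 0\le i<k^e\}$ linearly spans every element of the kernel; equivalently it admits a linear representation $a_n = v\gamma((n)_k)w$. *)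

(* Defs.v *)
From mathcomp Require Import all_boot all_order all_algebra.
Set Implicit Arguments. Unset Strict Implicit. Unset Printing Implicit Defensive.
Import GRing.Theory Num.Theory.
Local Open Scope ring_scope.

Inductive dir := U | D | R | L.

Definition tD (a : dir) : dir :=
  match a with U => R | D => L | R => U | L => D end.
Definition tH (a : dir) : dir :=
  match a with U => D | D => U | R => L | L => R end.

Fixpoint Aw (n : nat) : seq dir :=
  match n with
  | 0 => [::]
  | n'.+1 =>
      let a := Aw n' in
      if ~~ odd n' then
        a ++ U :: map tD a ++ R :: map tD a ++ D :: map tH a
      else
        a ++ R :: map tD a ++ U :: map tD a ++ L :: map tH a
  end.

Definition step (a : dir) (p : int * int) : int * int :=
  match a with
  | R => (p.1 + 1, p.2)
  | L => (p.1 - 1, p.2)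
  | U => (p.1, p.2 + 1)
  | D => (p.1, p.2 - 1)
  end.

Fixpoint pos (h : nat -> dir) (n : nat) : int * int :=
  match n with
  | 0 => (0, 0)
  | n'.+1 => step (h n') (pos h n')
  end.

Definition coordmx (p : int * int) : 'M[int]_(2, 1) :=
  \matrix_(i < 2, j < 1) (if i == 0 :> nat then p.1 else p.2).

(* Base-4 representation, most significant digit first; (0)_4 is empty. *)
Fixpoint base4_aux (k n : nat) : seq nat :=
  match k with
  | 0 => [::]
  | k'.+1 => if n == 0%N then [::] else rcons (base4_aux k' (n %/ 4)%N) (n %% 4)%N
  end.
Definition base4 (n : nat) : seq nat := base4_aux n n.

Definition mx_of (m n : nat) (s : seq (seq int)) : 'M[int]_(m, n) :=
  \matrix_(i < m, j < n) nth 0 (nth [::] s i) j.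

Definition vH : 'M[int]_(2, 5) :=
  mx_of 2 5 [:: [:: 0; 0; 0; 1; 0]; [:: 0; 0; 1; 1; 0]].
Definition wH : 'M[int]_(5, 1) :=
  mx_of 5 1 [:: [:: 1]; [:: 0]; [:: 0]; [:: 0]; [:: 0]].

Definition gamma0 : 'M[int]_5 := mx_of 5 5
  [:: [:: 0; 0; 0; 0; -4];
      [:: 1; 0; -1; -1; 4];
      [:: 0; 0; 1; 0; 0];
      [:: 0; 0; 0; 1; 0];
      [:: 0; 1; 1; 1; 1]].
Definition gamma1 : 'M[int]_5 := mx_of 5 5
  [:: [:: 0; 0; 0; 0; -4];
      [:: 0; 0; 0; -1; 0];
      [:: 1; -2; -3; -2; 4];
      [:: 0; 2; 3; 3; 0];
      [:: 0; 1; 1; 1; 1]].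
Definition gamma2 : 'M[int]_5 := mx_of 5 5
  [:: [:: 0; 0; 0; 0; -4];
      [:: 0; -2; -2; -3; 0];
      [:: 0; 0; -1; 0; 0];
      [:: 1; 2; 3; 3; 4];
      [:: 0; 1; 1; 1; 1]].
Definition gamma3 : 'M[int]_5 := mx_of 5 5
  [:: [:: 0; 0; 0; 0; -4];
      [:: 1; -3; -2; -2; 1];
      [:: -1; 2; 1; 2; -4];
      [:: 1; 1; 1; 0; 7];
      [:: 0; 1; 1; 1; 1]].

(* gamma on digits 0..3 (other values never occur in base4 outputs) *)
Definition gammaH (d : nat) : 'M[int]_5 :=
  match d with 0 => gamma0 | 1 => gamma1 | 2 => gamma2 | _ => gamma3 end.

Definition gamma_word (s : seq nat) : 'M[int]_5 :=
  foldr (fun d M => gammaH d *m M) 1%:M s.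

(* Main.v *)
Require Import Defs.
From mathcomp Require Import all_boot all_order all_algebra.
From mathcomp Require Import zify ring.
Set Implicit Arguments. Unset Strict Implicit. Unset Printing Implicit Defensive.
Import GRing.Theory Num.Theory.
Local Open Scope ring_scope.

Definition Fv (a b e x y : int) : 'cV[int]_5 :=
  \col_(i < 5) nth 0 [:: a; b - y; y - x; x; e] i.

Lemma g0E a b e x y : gamma0 *m Fv a b e x y = Fv (-4 * e) (a + 4 * e) (b + e) x y.
Proof.
apply/matrixP => i j; rewrite !mxE !big_ord_recr big_ord0 /= !mxE /=.
case: i => [[|[|[|[|[|i]]]]] Hi] //=; lia.
Qed.
Lemma g1E a b e x y : gamma1 *m Fv a b e x y =
  Fv (-4 * e) (a + 4 * e) (b + e) (y + 2 * b) (x + a + 4 * e).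
Proof.
apply/matrixP => i j; rewrite !mxE !big_ord_recr big_ord0 /= !mxE /=.
case: i => [[|[|[|[|[|i]]]]] Hi] //=; lia.
Qed.
Lemma g2E a b e x y : gamma2 *m Fv a b e x y =
  Fv (-4 * e) (a + 4 * e) (b + e) (a + 2 * b + 4 * e + y) (a + 2 * b + 4 * e + x).
Proof.
apply/matrixP => i j; rewrite !mxE !big_ord_recr big_ord0 /= !mxE /=.
case: i => [[|[|[|[|[|i]]]]] Hi] //=; lia.
Qed.
Lemma g3E a b e x y : gamma3 *m Fv a b e x y =
  Fv (-4 * e) (a + 4 * e) (b + e) (a + b + 7 * e - x) (3 * b + 3 * e - y).
Proof.
apply/matrixP => i j; rewrite !mxE !big_ord_recr big_ord0 /= !mxE /=.
case: i => [[|[|[|[|[|i]]]]] Hi] //=; lia.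
Qed.
Lemma vHF a b e x y : vH *m Fv a b e x y = coordmx (x, y).
Proof.
apply/matrixP => i j; rewrite !mxE !big_ord_recr big_ord0 /= !mxE /=.
case: i => [[|[|i]] Hi] //=; lia.
Qed.
Lemma wHF : wH = Fv 1 0 0 0 0.
Proof.
apply/matrixP => i j; rewrite !mxE /=.
case: i => [[|[|[|[|[|i]]]]] Hi] //=; case: j => [[|j] Hj] //.
Qed.
Lemma vHg0 : vH *m gamma0 = vH.
Proof.
apply/matrixP => i j; rewrite !mxE !big_ord_recr big_ord0 /= !mxE /=.
case: i => [[|[|i]] Hi] //=; case: j => [[|[|[|[|[|j]]]]] Hj] //=.
Qed.

Fixpoint abe (k : nat) : int * int * int :=
  match k with
  | 0 => (1, 0, 0)
  | k'.+1 => let t := abe k' in (-4 * t.2, t.1.1 + 4 * t.2, t.1.2 + t.2)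
  end.

Lemma abe_inv k : let p := Posz (2 ^ k) in
  if odd k then 2 * (abe k).1.2 = p /\ 3 * (abe k).2 = (abe k).1.2 - 1 /\ (abe k).1.1 = -4 * (abe k).2
  else (abe k).1.2 = 0 /\ 3 * (abe k).2 = p - 1 /\ (abe k).1.1 = p - 4 * (abe k).2.
Proof.
elim: k => [|k IH] /=; first by rewrite expn0; lia.
rewrite expnS PoszM.
move: IH; case: (odd k) => /=; move: (Posz (2 ^ k)) => p; lia.
Qed.

Definition ex (a : dir) : int := match a with R => 1 | L => -1 | _ => 0 end.
Definition ey (a : dir) : int := match a with U => 1 | D => -1 | _ => 0 end.
Definition dx (w : seq dir) : int := \sum_(a <- w) ex a.
Definition dy (w : seq dir) : int := \sum_(a <- w) ey a.

Lemma dx_nil : dx [::] = 0. Proof. by rewrite /dx big_nil. Qed.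
Lemma dy_nil : dy [::] = 0. Proof. by rewrite /dy big_nil. Qed.
Lemma dx_cons a w : dx (a :: w) = ex a + dx w. Proof. by rewrite /dx big_cons. Qed.
Lemma dy_cons a w : dy (a :: w) = ey a + dy w. Proof. by rewrite /dy big_cons. Qed.
Lemma dx_cat w1 w2 : dx (w1 ++ w2) = dx w1 + dx w2. Proof. by rewrite /dx big_cat. Qed.
Lemma dy_cat w1 w2 : dy (w1 ++ w2) = dy w1 + dy w2. Proof. by rewrite /dy big_cat. Qed.
Lemma dx_tD w : dx (map tD w) = dy w.
Proof. by rewrite /dx big_map; apply: eq_bigr => -[]. Qed.
Lemma dy_tD w : dy (map tD w) = dx w.
Proof. by rewrite /dy big_map; apply: eq_bigr => -[]. Qed.
Lemma dx_tH w : dx (map tH w) = - dx w.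
Proof. by rewrite /dx big_map -sumrN; apply: eq_bigr => -[]. Qed.
Lemma dy_tH w : dy (map tH w) = - dy w.
Proof. by rewrite /dy big_map -sumrN; apply: eq_bigr => -[]. Qed.

Lemma AwS k : Aw k.+1 =
  if ~~ odd k then
    Aw k ++ U :: map tD (Aw k) ++ R :: map tD (Aw k) ++ D :: map tH (Aw k)
  else
    Aw k ++ R :: map tD (Aw k) ++ U :: map tD (Aw k) ++ L :: map tH (Aw k).
Proof. by []. Qed.

Lemma size_Aw k : (size (Aw k)).+1 = (4 ^ k)%N.
Proof.
elim: k => [|k IH] //; rewrite AwS expnS -IH.
case: (odd k) => /=; rewrite ?size_cat /= ?size_cat /= ?size_cat /= ?size_map; lia.
Qed.

Lemma end_Aw k : let p := Posz (2 ^ k) in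
  if odd k then dx (Aw k) = p - 1 /\ dy (Aw k) = 0
  else dx (Aw k) = 0 /\ dy (Aw k) = p - 1.
Proof.
elim: k => [|k IH]; first by rewrite /= dx_nil dy_nil expn0.
rewrite AwS /= expnS PoszM.
move: IH; case: (odd k) => /=;
rewrite !(dx_cat, dy_cat, dx_cons, dy_cons, dx_tD, dy_tD, dx_tH, dy_tH) /=;
move: (Posz (2 ^ k)) => p; lia.
Qed.

Lemma take_add (T : Type) (s1 s2 : seq T) m :
  take (size s1 + m) (s1 ++ s2) = s1 ++ take m s2.
Proof. by rewrite take_cat ltnNge leq_addr /= addKn. Qed.

Lemma pos_take h k
  (hHC : forall (k i : nat), (i < size (Aw k))%N -> h i = nth U (Aw k) i) n :
  (n <= size (Aw k))%N -> pos h n = (dx (take n (Aw k)), dy (take n (Aw k))).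
Proof.
elim: n => [|n IH] Hn /=; first by rewrite take0 dx_nil dy_nil.
rewrite IH ?(ltnW Hn) // (take_nth U Hn) -cats1 dx_cat dy_cat -(hHC k n Hn).
by case: (h n); rewrite /= dx_cons dy_cons dx_nil dy_nil /= ?addr0.
Qed.

Fixpoint dk (k N : nat) : seq nat :=
  match k with 0 => [::] | k'.+1 => rcons (dk k' (N %/ 4)%N) (N %% 4)%N end.

Lemma dk_top k N : dk k.+1 N = (N %/ 4 ^ k %% 4)%N :: dk k N.
Proof.
elim: k N => [|k IH] N; first by rewrite /= expn0 divn1.
by rewrite -[dk k.+2 N]/(rcons (dk k.+1 (N %/ 4)%N) (N %% 4)%N) IH /= expnS divnMA.
Qed.

Lemma dk_mod k N : dk k N = dk k (N %% 4 ^ k)%N.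
Proof.
elim: k N => [|k IH] N //=.
rewrite (IH (N %/ 4)%N) (IH (N %% 4 ^ k.+1 %/ 4)%N).
have -> : (N %% 4 ^ k.+1 %% 4 = N %% 4)%N.
  by rewrite modn_dvdm // expnS dvdn_mulr.
by rewrite !modn_divl -expnSr modn_mod.
Qed.

Lemma base4_fuel f1 f2 N : (N <= f1)%N -> (N <= f2)%N -> base4_aux f1 N = base4_aux f2 N.
Proof.
elim: f1 f2 N => [|f1 IH] f2 N H1 H2.
  by move: H1; rewrite leqn0 => /eqP ->; case: f2 {H2}.
case: f2 H2 => [|f2] H2.
  by move: H2; rewrite leqn0 => /eqP ->.
rewrite /=; case: eqP => // /eqP N0.
by rewrite (@IH f2) //; lia.
Qed.

Lemma base4S N : (0 < N)%N -> base4 N = rcons (base4 (N %/ 4)%N) (N %% 4)%N.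
Proof.
case: N => [|m] // _; rewrite /base4 /=.
by rewrite (@base4_fuel m (m.+1 %/ 4)%N) //; lia.
Qed.

Lemma gw_rcons s d : gamma_word (rcons s d) = gamma_word s *m gammaH d.
Proof.
elim: s => [|c s IH] /=; first by rewrite mulmx1 mul1mx.
by rewrite IH mulmxA.
Qed.

Lemma vH_dk k N : (N < 4 ^ k)%N -> vH *m gamma_word (dk k N) = vH *m gamma_word (base4 N).
Proof.
elim: k N => [|k IH] N HN.
  by have -> : N = 0%N by move: HN; rewrite expn0; lia.
rewrite /= gw_rcons mulmxA IH; last by rewrite ltn_divLR // -expnSr.
case: (posnP N) => [->|Npos]; last by rewrite (base4S Npos) gw_rcons mulmxA.
by rewrite /= mulmx1 vHg0.
Qed.

Lemma mainF k N : (N < 4 ^ k)%N -> gamma_word (dk k N) *m wH =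
  Fv (abe k).1.1 (abe k).1.2 (abe k).2 (dx (take N (Aw k))) (dy (take N (Aw k))).
Proof.
elim: k N => [|k IH] N HN.
  have -> : N = 0%N by move: HN; rewrite expn0; lia.
  by rewrite /= mul1mx wHF dx_nil dy_nil.
have H4 : (0 < 4 ^ k)%N by rewrite expn_gt0.
have Hq : (N %/ 4 ^ k < 4)%N by rewrite ltn_divLR // mulnC -expnSr.
rewrite dk_top dk_mod (modn_small Hq) /= -mulmxA IH ?ltn_pmod //.
move: (divn_eq N (4 ^ k)) (ltn_pmod N H4) Hq.
move: (N %/ 4 ^ k)%N (N %% 4 ^ k)%N => q r -> Hr Hq.
rewrite -size_Aw in Hr *.
have Hr' : (r <= size (Aw k))%N by [].
move: (abe_inv k) (end_Aw k).
move: (Aw k) Hr' => A Hr'; clear Hr.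
set a := (abe k).1.1; set b := (abe k).1.2; set e := (abe k).2.
have H1 : (1 * (size A).+1 + r = size A + r.+1)%N by lia.
have H2 : (2 * (size A).+1 + r = size A + (size (map tD A) + r.+1).+1)%N
  by rewrite size_map; lia.
have H3 : (3 * (size A).+1 + r =
   size A + (size (map tD A) + (size (map tD A) + r.+1).+1).+1)%N
  by rewrite size_map; lia.
have Hr2 : (r <= size (map tD A))%N by rewrite size_map.
have Hr3 : (r <= size (map tH A))%N by rewrite size_map.
case: q Hq => [|[|[|[|q]]]] Hq //.
- rewrite mul0n add0n.
  by case: (odd k) => /= _ _; rewrite takel_cat // g0E.
- rewrite H1 /=.
  case: (odd k) => /= -[Hb [He Ha]] [Ex Ey];
  rewrite take_add /= takel_cat // -map_take g1E
    !(dx_cat, dy_cat, dx_cons, dy_cons, dx_tD, dy_tD, dx_tH, dy_tH) /=;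
  congr Fv; lia.
- rewrite H2 /=.
  case: (odd k) => /= -[Hb [He Ha]] [Ex Ey];
  rewrite take_add /= take_add /= takel_cat // -map_take g2E
    !(dx_cat, dy_cat, dx_cons, dy_cons, dx_tD, dy_tD, dx_tH, dy_tH) /=;
  congr Fv; lia.
- rewrite H3 /=.
  case: (odd k) => /= -[Hb [He Ha]] [Ex Ey];
  rewrite take_add /= take_add /= take_add /= -map_take g3E
    !(dx_cat, dy_cat, dx_cons, dy_cons, dx_tD, dy_tD, dx_tH, dy_tH) /=;
  congr Fv; lia.
Qed.

Unset Implicit Arguments.
Theorem mainTheorem2 (h : nat -> dir)
  (hHC : forall (k i : nat), (i < size (Aw k))%N -> h i = nth U (Aw k) i)
  (n : nat) :
  coordmx (pos h n) = vH *m gamma_word (base4 n) *m wH.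
Proof.
have Hn : (n < 4 ^ n)%N by apply: ltn_expl.
rewrite (@pos_take h n hHC n); last by rewrite -ltnS size_Aw.
by rewrite -(@vH_dk n n) // -mulmxA mainF // vHF.
Qed.
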